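(* For any sequence of pairs of probability distributions $\{(Q_n,G_n)\}$, one has $0\le\underline{\beta}^*\le\overline{\beta}^*\le1$.
   Context: For $\beta\ge0$ let $V_n(\beta)=\mathrm{TV}\big(Q_n^{n},((1-n^{-\beta})Q_n+n^{-\beta}G_n)^{n}\big)$, where $\mathrm{TV}(P,Q)=\sup_A|P(A)-Q(A)|$ is the total variation distance and $P^n$ the $n$-fold product measure. Define $\underline{\beta}^*=\sup\{\beta\ge0: V_n(\beta)\to1\}$ and $\overline{\beta}^*=\inf\{\beta\ge0:V_n(\beta)\to0\}$ (limits as $n\to\infty$). These are the fundamental limits for testing $H_0:Y_i\stackrel{iid}{\sim}Q_n$ versus $H_1:Y_i\stackrel{iid}{\sim}(1-n^{-\beta})Q_n+n^{-\beta}G_n$, $i=1,\dots,n$. *)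

(* Defs.v *)
From HB Require Import structures.
From mathcomp Require Import all_boot all_order all_algebra.
From mathcomp Require Import all_classical all_reals all_analysis.

Set Implicit Arguments.
Unset Strict Implicit.
Unset Printing Implicit Defensive.

Import Order.TTheory GRing.Theory Num.Theory.
Import numFieldNormedType.Exports.

Local Open Scope classical_set_scope.
Local Open Scope ring_scope.
Local Open Scope ereal_scope.

Definition mixture {d} {T : measurableType d} {R : realType}
    (eps : R) (Q G : set T -> \bar R) : set T -> \bar R :=
  fun A => (1 - eps)%:E * Q A + eps%:E * G A.

(* n-fold product measure P^n on n.-tuple T (whose sigma-algebra is the
   product sigma-algebra generated by the coordinate maps), defined by
   iterated integration:  P^0 = dirac at the empty tuple,
   P^(m+1)(A) = \int P(dx) P^m {t | x :: t \in A}. *)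
Fixpoint prodn {d} {T : measurableType d} {R : realType}
    (P : set T -> \bar R) (n : nat) : set (n.-tuple T) -> \bar R :=
  match n return set (n.-tuple T) -> \bar R with
  | 0%N => fun A => ((\1_A [tuple]) : R)%:E
  | m.+1 => fun A => \int[P]_x (@prodn d T R P m [set t | A (cons_tuple x t)])
  end.
Arguments prodn {d T R} P n.

Definition TV {d} {U : measurableType d} {R : realType}
    (P P' : set U -> \bar R) : \bar R :=
  ereal_sup [set `|P A - P' A| | A in measurable].

Definition Vn {d} {T : measurableType d} {R : realType}
    (Q G : nat -> probability T R) (n : nat) (beta : R) : \bar R :=
  TV (prodn (Q n) n)
     (prodn (mixture ((n%:R) `^ (- beta)) (Q n) (G n)) n).

(* lower beta* = sup {beta >= 0 : V_n(beta) -> 1}, with the convention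
   sup of the empty set = 0 (all candidates are >= 0). *)
Definition beta_low {d} {T : measurableType d} {R : realType}
    (Q G : nat -> probability T R) : \bar R :=
  ereal_sup ([set 0] `|`
    [set b%:E | b in [set b : R | (0 <= b)%R /\
                        (fun n => Vn Q G n b) @ \oo --> 1]]).

(* upper beta* = inf {beta >= 0 : V_n(beta) -> 0}  (inf of empty = +oo). *)
Definition beta_up {d} {T : measurableType d} {R : realType}
    (Q G : nat -> probability T R) : \bar R :=
  ereal_inf
    [set b%:E | b in [set b : R | (0 <= b)%R /\
                        (fun n => Vn Q G n b) @ \oo --> 0]].

(* Main.v *)
Require Import Defs.
From HB Require Import structures.
From mathcomp Require Import all_boot all_order all_algebra.
From mathcomp Require Import all_classical all_reals all_analysis.
From mathcomp Require Import measurable_realfun.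
From mathcomp.algebra_tactics Require Import ring lra.
Set Implicit Arguments.
Unset Strict Implicit.
Unset Printing Implicit Defensive.
Import Order.TTheory GRing.Theory Num.Theory.
Import numFieldNormedType.Exports.
Local Open Scope classical_set_scope.
Local Open Scope ring_scope.
Local Open Scope ereal_scope.
Section S.
Context d (T : measurableType d) (R : realType).

Definition consf (m : nat) (p : T * m.-tuple T) : m.+1.-tuple T :=
  cons_tuple p.1 p.2.

Lemma measurable_consf m : measurable_fun setT (@consf m).
Proof.
have -> : @consf m = (fun p => [the m.+1.-tuple T of p.1 :: p.2]).
  by apply/funext => p; apply/val_inj.
by apply: measurable_cons.
Qed.

HB.instance Definition _ m := isMeasurableFun.Build _ _ _ _ (@consf m)
  (@measurable_consf m).

Fixpoint pn (P : probability T R) (n : nat) : probability (n.-tuple T) R :=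
  match n with
  | 0%N => [the probability _ _ of dirac [tuple]]
  | m.+1 => distribution (P \x pn P m) (@consf m)
  end.

Lemma measurable_cons1 m (x : T) :
  measurable_fun setT (fun y : m.-tuple T => cons_tuple x y).
Proof.
have -> : (fun y : m.-tuple T => cons_tuple x y) =
   (fun y => [the m.+1.-tuple T of (cst x y) :: (id y)]).
  by apply/funext => p; apply/val_inj.
by apply: measurable_cons.
Qed.

Lemma measurable_section m (A : set (m.+1.-tuple T)) (x : T) :
  measurable A -> measurable [set y : m.-tuple T | A (cons_tuple x y)].
Proof.
move=> mA; rewrite -[X in measurable X]setTI.
exact: (measurable_cons1 x) mA.
Qed.

Lemma pnS_set (P : probability T R) m (A : set (m.+1.-tuple T)) :
  measurable A ->
  pn P m.+1 A = \int[P]_x pn P m [set y | A (cons_tuple x y)].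
Proof.
move=> mA /=; rewrite /distribution /pushforward /product_measure1.
apply: eq_integral => x _ /=; congr (pn P m _).
by apply/seteqP; split => y /=; rewrite /xsection /= in_setE.
Qed.

Lemma pnS_int (P : probability T R) m (f : m.+1.-tuple T -> \bar R) :
  measurable_fun setT f -> (forall z, 0 <= f z) ->
  \int[pn P m.+1]_z f z = \int[P]_x \int[pn P m]_y f (cons_tuple x y).
Proof.
move=> mf f0 /=.
rewrite /distribution (ge0_integral_pushforward (@measurable_consf m)) //.
rewrite preimage_setT.
rewrite (fubini_tonelli1 (f \o @consf m)) //.
apply: measurableT_comp => //; exact: measurable_consf.
by move=> x; exact: f0.
Qed.

Lemma prodn_pn (P : probability T R) n (A : set (n.-tuple T)) :
  measurable A -> prodn P n A = pn P n A.
Proof.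
elim: n A => [|m IH] A mA.
  by rewrite /= diracE indicE.
rewrite pnS_set //=.
apply: eq_integral => x _; apply: IH; exact: measurable_section.
Qed.

Lemma TV_ext dd (U : measurableType dd) (P1 P2 P1' P2' : set U -> \bar R) :
  (forall A, measurable A -> P1 A = P2 A) ->
  (forall A, measurable A -> P1' A = P2' A) ->
  TV P1 P1' = TV P2 P2'.
Proof.
move=> h h'; rewrite /TV; congr ereal_sup; apply/seteqP; split.
  by move=> _ [A mA <-]; exists A => //; rewrite h // h'.
by move=> _ [A mA <-]; exists A => //; rewrite h // h'.
Qed.

Section mix.
Variables (e : R) (he : (0 <= e <= 1)%R) (P1 P2 : probability T R).

Definition mixf (_ : (0 <= e <= 1)%R) := mixture e P1 P2.
Local Notation M := (mixf he).

Let r1 : {nonneg R} := NngNum (ltac:(by case/andP: he => _ h; rewrite subr_ge0) : (0 <= 1 - e)%R).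
Let r2 : {nonneg R} := NngNum (ltac:(by case/andP: he) : (0 <= e)%R).

Lemma mixf_add : M = measure_add (mscale r1 P1) (mscale r2 P2).
Proof. by apply/funext => A; rewrite measure_addE. Qed.

Let mixf0 : M set0 = 0.
Proof. by rewrite /mixf /mixture !measure0 !mule0 adde0. Qed.
Let mixf_ge0 A : 0 <= M A.
Proof. by rewrite mixf_add measure_addE adde_ge0. Qed.
Let mixf_sa : semi_sigma_additive M.
Proof. rewrite mixf_add; exact: (@measure_semi_sigma_additive _ _ _ (measure_add (mscale r1 P1) (mscale r2 P2))). Qed.

HB.instance Definition _ := isMeasure.Build _ _ _ M mixf0 mixf_ge0 mixf_sa.

Let mixf_setT : M setT = 1.
Proof.
rewrite /mixf /mixture !probability_setT !mule1 -EFinD.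
by congr EFin; rewrite subrK.
Qed.

HB.instance Definition _ := Measure_isProbability.Build _ _ _ M mixf_setT.

Lemma integral_mixf (h : T -> \bar R) : measurable_fun setT h -> (forall x, 0 <= h x) ->
  \int[M]_x h x = (1 - e)%:E * \int[P1]_x h x + e%:E * \int[P2]_x h x.
Proof.
move=> mh h0.
rewrite (eq_measure_integral (measure_add (mscale r1 P1) (mscale r2 P2))); last first.
  by move=> A _ _; exact: (congr1 (fun f => f A) mixf_add).
rewrite (ge0_integral_measure_add (mscale r1 P1) (mscale r2 P2) measurableT); last 2 first.
- by move=> x _; exact: h0.
- exact: mh.
by rewrite !ge0_integral_mscale //; move=> x _; exact: h0.
Qed.
End mix.

Lemma int01 dd (U : measurableType dd) (P : probability U R) (h : U -> R) :
  measurable_fun setT h -> (forall x, (0 <= h x <= 1)%R) ->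
  0 <= \int[P]_x (h x)%:E <= 1.
Proof.
move=> mh h01; apply/andP; split.
  by apply: integral_ge0 => x _; rewrite lee_fin; case/andP: (h01 x).
apply: (@le_trans _ _ (\int[P]_x (cst 1 x))).
  apply: ge0_le_integral => //.
  - by move=> x _; rewrite lee_fin; case/andP: (h01 x).
  - exact/measurable_EFinP.
  - by move=> x _; rewrite lee_fin; case/andP: (h01 x).
by rewrite integral_cst // mul1e probability_le1.
Qed.

Lemma behead_cons m (x : T) (y : m.-tuple T) : behead_tuple (cons_tuple x y) = y.
Proof. by apply/val_inj. Qed.

Lemma thead_cons m (x : T) (y : m.-tuple T) : thead (cons_tuple x y) = x.
Proof. by []. Qed.

Lemma measurable_behead_tuple m : measurable_fun setT (@behead_tuple m.+1 T).
Proof.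
have -> : @behead_tuple m.+1 T = (fun x => [tuple of behead x]).
  by apply/funext => x; apply/val_inj.
exact: measurable_behead.
Qed.

Lemma measurable_thead m : measurable_fun setT (@thead m T).
Proof. exact: (@measurable_tnth _ T m.+1 ord0). Qed.

Section kernel.
Variables (Q : probability T R) (t : R) (ht : (0 <= t <= 1)%R).

Fixpoint K n : (n.-tuple T -> R) -> n.-tuple T -> R :=
  match n with
  | 0%N => fun f => f
  | m.+1 => fun f z =>
     (t * K (fun y => f (cons_tuple (thead z) y)) (behead_tuple z)
      + (1 - t) * fine (\int[Q]_x (K (fun y => f (cons_tuple x y)) (behead_tuple z))%:E))%R
  end.

Lemma Kprop n : forall dd (U : measurableType dd) (F : U * n.-tuple T -> R),
  measurable_fun setT F -> (forall p, (0 <= F p <= 1)%R) ->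
  measurable_fun setT (fun p : U * n.-tuple T => K (fun y => F (p.1, y)) p.2) /\
  (forall p : U * n.-tuple T, (0 <= K (fun y => F (p.1, y)) p.2 <= 1)%R).
Proof.
elim: n => [|m IH] dd U F mF F01.
  by split => [|p]; [rewrite /=; apply: eq_measurable_fun mF => -[]|exact: F01].
pose F' := fun q : (U * T) * m.-tuple T => F (q.1.1, cons_tuple q.1.2 q.2).
have mF' : measurable_fun setT F'.
  apply: (measurableT_comp mF).
  apply: measurable_fun_pair.
    exact: (measurableT_comp measurable_fst measurable_fst).
  exact: (measurableT_comp (@measurable_consf m) (measurable_fun_pair (measurableT_comp measurable_snd measurable_fst) measurable_snd)).
have [mG G01] := IH _ _ F' mF' (fun q => F01 _).
set G := fun q => _ in mG G01.
pose H := fun q : (U * m.-tuple T) * T => (G ((q.1.1, q.2), q.1.2))%:E.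
have mH : measurable_fun setT H.
  apply/measurable_EFinP; apply: (measurableT_comp mG).
  apply: measurable_fun_pair; last exact: (measurableT_comp measurable_snd measurable_fst).
  apply: measurable_fun_pair; last exact: measurable_snd.
  exact: (measurableT_comp measurable_fst measurable_fst).
have H0 : forall q, 0 <= H q by move=> q; rewrite lee_fin; case/andP: (G01 ((q.1.1, q.2), q.1.2)).
have mFH := measurable_fun_fubini_tonelli_F (m2:=Q) H mH H0.
have FH01 : forall q, 0 <= fubini_F Q H q <= 1.
  move=> q; apply: int01.
    apply: (measurableT_comp mG).
    apply: measurable_fun_pair; last exact: measurable_cst.
    by apply: measurable_fun_pair; [exact: measurable_cst|exact: measurable_id].
  by move=> x; exact: G01.
split.
  rewrite /=.
  apply: measurable_funD.
    apply: measurable_funM; first exact: measurable_cst.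
    exact: (measurableT_comp mG (measurable_fun_pair (measurable_fun_pair measurable_fst
      (measurableT_comp (@measurable_thead m) measurable_snd))
      (measurableT_comp (@measurable_behead_tuple m) measurable_snd))).
  apply: measurable_funM; first exact: measurable_cst.
  exact: (measurableT_comp (fine_measurable measurableT) (measurableT_comp mFH
     (measurable_fun_pair measurable_fst (measurableT_comp (@measurable_behead_tuple m) measurable_snd)))).
move=> [u z] /=.
have := G01 ((u, thead z), behead_tuple z).
have := FH01 (u, behead_tuple z).
rewrite /fubini_F /H /G /=.
set a := K _ _; set b := \int[Q]_x _ => /andP [b0 b1] /andP [a0 a1].
have fb0 : (0 <= fine b)%R by rewrite fine_ge0.
have fb1 : (fine b <= 1)%R.
  by rewrite -lee_fin fineK // ge0_fin_numE // (le_lt_trans b1) // ltry.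
case/andP: ht => t0 t1.
apply/andP; split; nra.
Qed.

Lemma Kprop_sec n dd (U : measurableType dd) (F : U * n.-tuple T -> R) (u : U) :
  measurable_fun setT F -> (forall p, (0 <= F p <= 1)%R) ->
  measurable_fun setT (K (fun y => F (u, y))) /\
  (forall z, (0 <= K (fun y => F (u, y)) z <= 1)%R).
Proof.
move=> mF F01; have [mK K01] := Kprop mF F01; split; last by move=> z; exact: (K01 (u, z)).
exact: (measurableT_comp mK (measurable_fun_pair (@measurable_cst _ _ _ _ setT u) (@measurable_id _ _ setT))).
Qed.

Lemma Kprop1 n (f : n.-tuple T -> R) :
  measurable_fun setT f -> (forall z, (0 <= f z <= 1)%R) ->
  measurable_fun setT (K f) /\ (forall z, (0 <= K f z <= 1)%R).
Proof.
move=> mf f01.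
have := @Kprop_sec n _ T (fun p => f p.2) (point : T) (measurableT_comp mf measurable_snd) (fun p => f01 _).
by [].
Qed.

Lemma fin01 (b : \bar R) : 0 <= b <= 1 -> (fine b)%:E = b.
Proof. by move=> /andP [b0 b1]; rewrite fineK // ge0_fin_numE // (le_lt_trans b1) // ltry. Qed.

Lemma Kval n (P P' : probability T R) :
  (forall h : T -> \bar R, measurable_fun setT h -> (forall x, 0 <= h x) ->
     \int[P']_x h x = t%:E * \int[P]_x h x + (1 - t)%:E * \int[Q]_x h x) ->
  forall f : n.-tuple T -> R, measurable_fun setT f -> (forall z, (0 <= f z <= 1)%R) ->
  \int[pn P n]_z (K f z)%:E = \int[pn P' n]_z (f z)%:E.
Proof.
move=> hP; elim: n => [|m IH] f mf f01; first by [].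
have [mKf Kf01] := Kprop1 mf f01.
pose F := fun p : T * m.-tuple T => f (cons_tuple p.1 p.2).
have mF : measurable_fun setT F.
  exact: (measurableT_comp mf (@measurable_consf m)).
have F01 : forall p, (0 <= F p <= 1)%R by move=> p; exact: f01.
have [mKF KF01] := Kprop mF F01.
rewrite pnS_int //; last 2 first.
- exact/measurable_EFinP.
- by move=> z; rewrite lee_fin; case/andP: (Kf01 z).
rewrite [in RHS]pnS_int //; last 2 first.
- exact/measurable_EFinP.
- by move=> z; rewrite lee_fin; case/andP: (f01 z).
pose psi := fun x => \int[pn P' m]_y (F (x, y))%:E.
have mpsi : measurable_fun setT psi.
  apply: (measurable_fun_fubini_tonelli_F (m2 := pn P' m) (EFin \o F)).
    exact/measurable_EFinP.
  by move=> p; rewrite lee_fin; case/andP: (F01 p).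
have psi01 : forall x, 0 <= psi x <= 1.
  move=> x; apply: int01; last by move=> y; exact: F01.
  exact: (measurableT_comp mF (measurable_fun_pair (@measurable_cst _ _ _ _ setT x) (@measurable_id _ _ setT))).
have psi0 : forall x, 0 <= psi x by move=> x; case/andP: (psi01 x).
have IHx : forall x, \int[pn P m]_y (K (fun y => F (x, y)) y)%:E = psi x.
  move=> x; apply: IH.
    exact: (measurableT_comp mF (measurable_fun_pair (@measurable_cst _ _ _ _ setT x) (@measurable_id _ _ setT))).
  by move=> y; exact: F01.
have inner : forall x, \int[pn P m]_y (K f (cons_tuple x y))%:E =
    t%:E * psi x + (1 - t)%:E * \int[Q]_x' psi x'.
  move=> x.
  have [mKx Kx01] := Kprop_sec x mF F01.
  transitivity (\int[pn P m]_y ((t%:E * (K (fun y => F (x, y)) y)%:E) +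
     (1 - t)%:E * (fine (\int[Q]_x' (K (fun y => F (x', y)) y)%:E))%:E)).
    by apply: eq_integral => y _; rewrite /= behead_cons EFinD !EFinM.
  case/andP: ht => t0 t1.
  rewrite ge0_integralD //; last 4 first.
  - by move=> y _; rewrite mule_ge0 // lee_fin; case/andP: (Kx01 y).
  - by apply: measurable_funeM; exact/measurable_EFinP.
  - move=> y _; rewrite mule_ge0 // ?lee_fin ?subr_ge0 //.
    by rewrite fine_ge0 // integral_ge0 // => x' _; rewrite lee_fin; case/andP: (KF01 (x', y)).
  - apply: measurable_funeM; apply/measurable_EFinP.
    apply: (measurableT_comp (fine_measurable measurableT)).
    apply: (measurable_fun_fubini_tonelli_G (m1 := Q) (fun p => (K (fun y => F (p.1, y)) p.2)%:E)).
      exact/measurable_EFinP.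
    by move=> p; rewrite lee_fin; case/andP: (KF01 p).
  rewrite ge0_integralZl; last 4 first.
  - exact: measurableT.
  - exact/measurable_EFinP.
  - by move=> y _; rewrite lee_fin; case/andP: (Kx01 y).
  - by rewrite lee_fin.
  rewrite IHx.
  rewrite ge0_integralZl; last 4 first.
  - exact: measurableT.
  - apply/measurable_EFinP.
    apply: (measurableT_comp (fine_measurable measurableT)).
    apply: (measurable_fun_fubini_tonelli_G (m1 := Q) (fun p => (K (fun y => F (p.1, y)) p.2)%:E)).
      exact/measurable_EFinP.
    by move=> p; rewrite lee_fin; case/andP: (KF01 p).
  - by move=> y _; rewrite lee_fin fine_ge0 // integral_ge0 // => x' _; rewrite lee_fin; case/andP: (KF01 (x', y)).
  - by rewrite lee_fin subr_ge0.
  congr (_ + _ * _).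
  transitivity (\int[pn P m]_y \int[Q]_x' (K (fun y => F (x', y)) y)%:E).
    apply: eq_integral => y _; apply: fin01; apply: int01.
      exact: (measurableT_comp (fst (Kprop mF F01)) (measurable_fun_pair (@measurable_id _ _ setT) (@measurable_cst _ _ _ _ setT y))).
    by move=> x'; exact: (KF01 (x', y)).
  rewrite -(fubini_tonelli (fun p => (K (fun y => F (p.1, y)) p.2)%:E)); last 2 first.
  - exact/measurable_EFinP.
  - by move=> p; rewrite lee_fin; case/andP: (KF01 p).
  by apply: eq_integral => x' _; exact: IHx.
under eq_integral => x _ do rewrite inner.
rewrite (_ : \int[P']_x \int[pn P' m]_y (f (cons_tuple x y))%:E = \int[P']_x psi x) //.
rewrite hP //.
have c0 : 0 <= \int[Q]_x' psi x' by apply: integral_ge0 => x _; exact: psi0.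
case/andP: ht => t0 t1.
rewrite ge0_integralD; last 5 first.
- exact: measurableT.
- by move=> x _; rewrite mule_ge0 // lee_fin.
- exact: measurable_funeM.
- by move=> x _; rewrite mule_ge0 // lee_fin subr_ge0.
- exact: measurable_cst.
rewrite ge0_integralZl; last 4 first.
- exact: measurableT.
- exact: mpsi.
- by move=> x _; exact: psi0.
- by rewrite lee_fin.
congr (_ + _); rewrite -[RHS]mule1; rewrite -(probability_setT P).
exact: (integral_cst P measurableT).
Qed.
End kernel.

Lemma probE dd (U : measurableType dd) (P : probability U R) (A : set U) :
  measurable A -> P A = (fine (P A))%:E /\ (0 <= fine (P A) <= 1)%R.
Proof.
move=> mA; have h : 0 <= P A <= 1 by rewrite measure_ge0 probability_le1.
split; first by rewrite fin01.
by case/andP: h => h0 h1; rewrite fine_ge0 //= -lee_fin fin01 //; apply/andP.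
Qed.

Section layer.
Context dd (U : measurableType dd) (al be : probability U R).

Lemma tv_ge A : measurable A -> `|al A - be A| <= TV al be.
Proof. by move=> mA; apply: ereal_sup_ubound; exists A. Qed.

Lemma tv_fin : TV al be = (fine (TV al be))%:E /\ (0 <= fine (TV al be))%R.
Proof.
have t0 : 0 <= TV al be by apply: le_trans (tv_ge measurable0); rewrite !measure0 subee.
have t1 : TV al be <= 1.
  apply/ereal_supP => _ [A mA <-].
  have [-> a01] := probE al mA; have [-> b01] := probE be mA.
  rewrite -EFinB lee_fin; case/andP: a01 => ? ?; case/andP: b01 => ? ?.
  rewrite ler_norml; apply/andP; split; lra.
have := fin01 (ltac:(by apply/andP) : 0 <= TV al be <= 1) => ->.
split => //; rewrite fine_ge0 //.
Qed.

Lemma sum_lt_nat (N n : nat) : (\sum_(k < N) (k < n)%N = minn n N)%N.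
Proof.
elim: N => [|N IH]; first by rewrite big_ord0 minn0.
rewrite big_ord_recr /= IH.
case: (ltnP N n) => Nn /=.
  by rewrite addn1; apply/esym/minn_idPr.
by rewrite addn0; apply/esym/minn_idPl; apply: leqW.
Qed.

Lemma sum_lt (N n : nat) : (n <= N)%N -> (\sum_(k < N) ((k < n)%N%:R : R) = n%:R)%R.
Proof. by move=> nN; rewrite -natr_sum sum_lt_nat (minn_idPl nN). Qed.

Lemma step_bound (N : nat) (y : R) : (0 < N)%N -> (0 <= y <= 1)%R ->
  (N%:R * y - 1 <= \sum_(k < N) ((k.+1)%:R / N%:R <= y)%R%:R <= N%:R * y)%R.
Proof.
move=> N0 /andP [y0 y1].
have Ny0 : (0 <= N%:R * y)%R by rewrite mulr_ge0.
have := truncn_itv Ny0; set n := Num.Def.trunc _ => /andP [nl nu].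
have nN : (n <= N)%N.
  by rewrite -(ler_nat R); apply: le_trans nl _; rewrite -[leRHS]mulr1 ler_wpM2l.
have Npos : (0 < N%:R :> R)%R by rewrite ltr0n.
have -> : (\sum_(k < N) ((k.+1)%:R / N%:R <= y)%R%:R = \sum_(k < N) ((k < n)%N%:R : R))%R.
  apply: eq_bigr => k _; congr (_%:R); congr nat_of_bool.
  rewrite ler_pdivrMr // mulrC.
  apply/idP/idP => h.
    rewrite ltnNge; apply/negP => kn.
    have : ((n.+1)%:R <= N%:R * y :> R)%R by apply: le_trans h; rewrite ler_nat.
    by rewrite leNgt nu.
  by apply: le_trans nl; rewrite ler_nat.
rewrite (sum_lt nN).
apply/andP; split.
  by rewrite lerBlDr; apply: ltW; move: nu; rewrite -natr1.
exact: nl.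
Qed.

Lemma tv_fun_N (g : U -> R) (N : nat) : measurable_fun setT g -> (forall x, (0 <= g x <= 1)%R) ->
  (0 < N)%N ->
  (N%:R * (fine (\int[al]_x (g x)%:E) - fine (\int[be]_x (g x)%:E))
     <= N%:R * fine (TV al be) + 1)%R.
Proof.
move=> mg g01 N0.
have [tvE tv0] := tv_fin.
pose A := fun k : 'I_N => [set x | ((k.+1)%:R / N%:R <= g x)%R].
have mA : forall k, measurable (A k).
  move=> k; have := mg measurableT _ (@measurable_itv _ `[((k.+1)%:R / N%:R)%R, +oo[).
  rewrite setTI; congr measurable; apply/seteqP; split => x /=; by rewrite in_itv andbT.
pose se := fun x => \sum_(k < N) ((\1_(A k) x : R))%:E.
have mse : measurable_fun setT se.
  apply: emeasurable_sum => k; apply/measurable_EFinP; exact: measurable_indic.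
have se0 : forall x, 0 <= se x by move=> x; apply: sume_ge0 => k _; rewrite lee_fin.
have seE : forall x, se x = (\sum_(k < N) ((k.+1)%:R / N%:R <= g x)%R%:R)%:E.
  move=> x; rewrite /se sumEFin; congr EFin; apply: eq_bigr => k _.
  by rewrite indicE /A; congr (nat_of_bool _)%:R; apply/idP/idP; rewrite inE.
have int_se : forall P : probability U R, \int[P]_x se x = (\sum_(k < N) fine (P (A k)))%:E.
  move=> P; rewrite /se ge0_integral_sum; last 3 first.
  - exact: measurableT.
  - by move=> k; apply/measurable_EFinP; exact: measurable_indic.
  - by move=> k x _; rewrite lee_fin.
  rewrite -sumEFin; apply: eq_bigr => k _.
  by rewrite integral_indic // setIT; case: (probE P (mA k)).
have intN : forall P : probability U R,
    \int[P]_x (N%:R * g x)%:E = (N%:R * fine (\int[P]_x (g x)%:E))%:E.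
  move=> P; under eq_integral do rewrite EFinM.
  rewrite ge0_integralZl; last 4 first.
  - exact: measurableT.
  - exact/measurable_EFinP.
  - by move=> x _; rewrite lee_fin; case/andP: (g01 x).
  - by rewrite lee_fin.
  by rewrite EFinM fin01 //; apply: int01.
have ind1 : measurable_fun setT (fun x => (N%:R * g x)%:E).
  by apply/measurable_EFinP; apply: measurable_funM => //; exact: measurable_cst.
have la : (N%:R * fine (\int[al]_x (g x)%:E) <= \sum_(k < N) fine (al (A k)) + 1)%R.
  rewrite -lee_fin -intN EFinD -int_se.
  apply: (@le_trans _ _ (\int[al]_x (se x + 1))).
    apply: ge0_le_integral => //.
    - by move=> x _; rewrite lee_fin mulr_ge0 //; case/andP: (g01 x).
    - by apply: emeasurable_funD => //; exact: measurable_cst.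
    - move=> x _; rewrite seE -EFinD lee_fin -lerBlDr.
      by case/andP: (step_bound N0 (g01 x)).
  rewrite ge0_integralD; last 5 first.
  - exact: measurableT.
  - by move=> x _; exact: se0.
  - exact: mse.
  - by move=> x _; rewrite lee_fin.
  - exact: measurable_cst.
  apply: leeD2l; rewrite (integral_cst al measurableT) mul1e; exact: probability_le1.
have lb : (\sum_(k < N) fine (be (A k)) <= N%:R * fine (\int[be]_x (g x)%:E))%R.
  rewrite -lee_fin -intN -int_se.
  apply: ge0_le_integral.
  - exact: measurableT.
  - by move=> x _; exact: se0.
  - exact: mse.
  - exact: ind1.
  - move=> x _; rewrite seE lee_fin.
    by case/andP: (step_bound N0 (g01 x)).
have ld : (\sum_(k < N) fine (al (A k)) - \sum_(k < N) fine (be (A k)) <= N%:R * fine (TV al be))%R.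
  rewrite -sumrB.
  apply: (@le_trans _ _ (\sum_(k < N) fine (TV al be))%R).
    apply: ler_sum => k _.
    have := tv_ge (mA k).
    case: (probE al (mA k)) => -> _; case: (probE be (mA k)) => -> _.
    rewrite {1}tvE -EFinB lee_fin => /ler_normlP [_ ->] //.
  by rewrite sumr_const card_ord mulr_natl.
rewrite mulrBr; lra.
Qed.


Lemma tv_fun (g : U -> R) : measurable_fun setT g -> (forall x, (0 <= g x <= 1)%R) ->
  \int[al]_x (g x)%:E - \int[be]_x (g x)%:E <= TV al be.
Proof.
move=> mg g01.
have [tvE tv0] := tv_fin.
rewrite tvE -(fin01 (int01 al mg g01)) -(fin01 (int01 be mg g01)) -EFinB lee_fin.
apply/ler_addgt0Pr => e e0.
set N := (Num.Def.trunc (e^-1)).+1.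
have hN := tv_fun_N mg g01 (ltn0Sn (Num.Def.trunc (e^-1))).
have eN : (e^-1 < N%:R)%R.
  have ie0 : (0 <= e^-1)%R by rewrite invr_ge0 ltW.
  have := truncn_itv ie0; case/andP => _ h; exact: h.
have Ne : (1 < N%:R * e)%R.
  have ei : (e * e^-1 = 1)%R by rewrite mulfV // gt_eqF.
  nra.
have N0 : (0 < N%:R :> R)%R by rewrite ltr0n.
move: hN; rewrite -/N.
set x := (_ - _)%R; set v := fine _.
move=> hN; nra.
Qed.
End layer.

Lemma TV_sym dd (U : measurableType dd) (al be : probability U R) : TV al be = TV be al.
Proof.
rewrite /TV; congr ereal_sup; apply/seteqP; split => _ [A mA <-]; exists A => //;
  case: (probE al mA) => -> _; case: (probE be mA) => -> _;
  by rewrite -!EFinB /= distrC.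
Qed.

Lemma mix_self (Q : probability T R) (t : R) (h : T -> \bar R) : (0 <= t <= 1)%R ->
  (forall x, 0 <= h x) ->
  \int[Q]_x h x = t%:E * \int[Q]_x h x + (1 - t)%:E * \int[Q]_x h x.
Proof.
move=> /andP [t0 t1] h0.
by rewrite -ge0_muleDl ?lee_fin ?subr_ge0 // -EFinD subrKC mul1e.
Qed.

Lemma tv_mono (Q M1 M2 : probability T R) (t : R) (n : nat) : (0 <= t <= 1)%R ->
  (forall h : T -> \bar R, measurable_fun setT h -> (forall x, 0 <= h x) ->
     \int[M1]_x h x = t%:E * \int[M2]_x h x + (1 - t)%:E * \int[Q]_x h x) ->
  TV (pn Q n) (pn M1 n) <= TV (pn Q n) (pn M2 n).
Proof.
move=> ht hM.
apply/ereal_supP => _ [A mA <-].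
pose f := fun z : n.-tuple T => (\1_A z : R).
have mf : measurable_fun setT f by exact: measurable_indic.
have f01 : forall z, (0 <= f z <= 1)%R.
  by move=> z; rewrite /f indicE; case: (z \in A); rewrite /= ?ler01 ?lexx.
have [mKf Kf01] := @Kprop1 Q t ht _ _ mf f01.
have eA : forall P : probability (n.-tuple T) R, P A = \int[P]_z (f z)%:E.
  by move=> P; rewrite integral_indic // setIT.
rewrite !eA.
rewrite -(Kval ht (fun h mh h0 => mix_self Q ht h0) mf f01).
rewrite -(Kval ht hM mf f01).
have h1 := tv_fun (pn Q n) (pn M2 n) mKf Kf01.
have h2 := tv_fun (pn M2 n) (pn Q n) mKf Kf01.
rewrite TV_sym in h2.
move: h1 h2.
rewrite -(fin01 (int01 (pn Q n) mKf Kf01)) -(fin01 (int01 (pn M2 n) mKf Kf01)).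
have [-> _] := tv_fin (pn Q n) (pn M2 n).
rewrite -!EFinB !lee_fin => h1 h2.
by rewrite ler_norml h1 andbT lerNl opprB.
Qed.

Lemma meas_sec (P : probability T R) m (A : set (m.+1.-tuple T)) : measurable A ->
  measurable_fun setT (fun x => pn P m [set y | A (cons_tuple x y)]).
Proof.
move=> mA.
have mB : measurable (@consf m @^-1` A).
  by rewrite -[X in measurable X]setTI; exact: (@measurable_consf m) mA.
have := measurable_fun_xsection (pn P m) mB.
congr measurable_fun; apply/funext => x /=; congr (pn P m _).
by apply/seteqP; split => y /=; rewrite /xsection /= in_setE.
Qed.

Lemma pn_lower (Q M : probability T R) (c : R) : (0 <= c)%R ->
  (forall h : T -> \bar R, measurable_fun setT h -> (forall x, 0 <= h x) ->
     c%:E * \int[Q]_x h x <= \int[M]_x h x) ->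
  forall n (A : set (n.-tuple T)), measurable A -> (c ^+ n)%:E * pn Q n A <= pn M n A.
Proof.
move=> c0 hM; elim => [|m IH] A mA.
  by rewrite expr0 mul1e.
rewrite !pnS_set //.
apply: (@le_trans _ _ (c%:E * \int[Q]_x pn M m [set y | A (cons_tuple x y)])); last first.
  apply: hM; first exact: meas_sec.
  by move=> x; exact: measure_ge0.
rewrite exprS EFinM -muleA; apply: lee_pmul => //.
  by rewrite mule_ge0 ?lee_fin ?exprn_ge0 // integral_ge0 // => x _; exact: measure_ge0.
rewrite -ge0_integralZl; last 4 first.
- exact: measurableT.
- exact: meas_sec.
- by move=> x _; exact: measure_ge0.
- by rewrite lee_fin exprn_ge0.
apply: ge0_le_integral.
- exact: measurableT.
- by move=> x _; rewrite mule_ge0 ?lee_fin ?exprn_ge0.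
- by apply: measurable_funeM; exact: meas_sec.
- exact: meas_sec.
- by move=> x _; apply: IH; exact: measurable_section.
Qed.

Lemma tv_upper (Q G : probability T R) (e : R) (he : (0 <= e <= 1)%R) n :
  TV (pn Q n) (pn (mixf Q G he) n) <= (1 - (1 - e) ^+ n)%:E.
Proof.
have [e0 e1] : (0 <= e)%R /\ (e <= 1)%R by apply/andP.
have c0 : (0 <= 1 - e)%R by rewrite subr_ge0.
have hM : forall h : T -> \bar R, measurable_fun setT h -> (forall x, 0 <= h x) ->
    (1 - e)%:E * \int[Q]_x h x <= \int[mixf Q G he]_x h x.
  move=> h mh h0; rewrite integral_mixf //.
  by rewrite leeDl // mule_ge0 ?lee_fin // integral_ge0.
apply/ereal_supP => _ [A mA <-].
have lowA := pn_lower c0 hM mA.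
have lowC := pn_lower c0 hM (measurableC mA).
rewrite !probability_setC // in lowC.
move: lowA lowC.
case: (probE (pn Q n) mA) => -> /andP [a0 a1].
case: (probE (pn (mixf Q G he) n) mA) => -> /andP [b0 b1].
rewrite -!EFinB -!EFinM !lee_fin => lA lC.
have cn0 : (0 <= (1 - e) ^+ n)%R by rewrite exprn_ge0.
have cn1 : ((1 - e) ^+ n <= 1)%R by rewrite exprn_ile1 // lerBlDr lerDl.
rewrite ler_norml; apply/andP; split; nra.
Qed.
End S.

Lemma npow_cvg0 (R : realType) (c : R) : (0 < c)%R ->
  (fun n : nat => (n%:R `^ (- c))%R) @ \oo --> (0 : R)%R.
Proof.
move=> c0; apply/cvgrPdist_lt => eps eps0.
set z := ((eps^-1) `^ (c^-1))%R.
have z0 : (0 <= z)%R by exact: powR_ge0.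
exists (Num.Def.trunc z).+1 => // n /= Nn.
rewrite sub0r normrN ger0_norm ?powR_ge0 //.
have zn : (z < n%:R)%R.
  have := truncn_itv z0 => /andP [_ h]; apply: (lt_le_trans h); by rewrite ler_nat.
have n0 : (0 < n%:R :> R)%R by apply: le_lt_trans zn.
have : ((z `^ c) < n%:R `^ c)%R.
  by apply: gt0_ltr_powR => //; rewrite nnegrE ltW.
have zc : (z `^ c = eps^-1)%R.
  by rewrite /z -powRrM mulVf ?gt_eqF // powRr1 // invr_ge0 ltW.
rewrite zc => h.
rewrite powRN -(invrK eps) ltf_pV2 ?posrE ?invr_gt0 ?powR_gt0 //.
Qed.

Lemma bern (R : realType) (e : R) (n : nat) : (0 <= e <= 1)%R -> (1 - (1 - e) ^+ n <= n%:R * e)%R.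
Proof.
move=> /andP [e0 e1]; elim: n => [|n IH]; first by rewrite expr0 subrr mul0r.
rewrite exprS -natr1.
have h0 : (0 <= (1 - e) ^+ n)%R by rewrite exprn_ge0 // subr_ge0.
have h1 : ((1 - e) ^+ n <= 1)%R by rewrite exprn_ile1 // ?subr_ge0 // lerBlDr lerDl.
nra.
Qed.

Lemma eps01 (R : realType) (n : nat) (b : R) : (0 <= b)%R -> (0 <= n%:R `^ (- b) <= 1)%R.
Proof.
move=> b0; rewrite powR_ge0 /=.
case: n => [|n].
  have [->|bn0] := eqVneq b 0%R; first by rewrite oppr0 powRr0.
  by rewrite powR0 ?oppr_eq0 //.
rewrite -[leRHS](powRr0 (n.+1%:R : R)); apply: ler_powR; first by rewrite ler1n.
by rewrite oppr_le0.
Qed.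

Section main.
Context d (T : measurableType d) (R : realType) (Q G : nat -> probability T R).

Lemma Vn_pn n (b : R) (hb : (0 <= b)%R) :
  Vn Q G n b = TV (pn (Q n) n) (pn (mixf (Q n) (G n) (eps01 n hb)) n).
Proof.
rewrite /Vn; apply: TV_ext => A mA; first exact: prodn_pn.
exact: (prodn_pn (mixf (Q n) (G n) (eps01 n hb)) mA).
Qed.

Lemma Vn_ge0 n (b : R) : (0 <= b)%R -> 0 <= Vn Q G n b.
Proof. by move=> hb; rewrite (Vn_pn n hb); case: (tv_fin (pn (Q n) n) (pn (mixf (Q n) (G n) (eps01 n hb)) n)) => -> ?; rewrite lee_fin. Qed.

Lemma Vn_cvg0 (b : R) : (1 < b)%R -> (fun n => Vn Q G n b) @ \oo --> 0.
Proof.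
move=> b1; have hb : (0 <= b)%R by apply: ltW; apply: lt_trans b1.
apply: (@squeeze_cvge _ _ _ _ (cst 0) _ (fun n => (n%:R `^ (- (b - 1)))%:E)).
- exists 1%N => // n /= n1.
  rewrite Vn_ge0 //=.
  rewrite (Vn_pn n hb); apply: le_trans (tv_upper _ _ _ _) _.
  rewrite lee_fin; apply: le_trans (bern _ (eps01 n hb)) _.
  rewrite opprB addrC powRD ?powRr1 //.
  by rewrite mulrC.
  by apply/implyP => _; rewrite pnatr_eq0 -lt0n.
- exact: cvg_cst.
- apply: cvg_EFin; first by apply: nearW.
  by apply: npow_cvg0; rewrite subr_gt0.
Qed.

Lemma mix_alg (e1 e2 t : R) (a g : \bar R) : (0 <= t <= 1)%R -> (0 <= e2 <= 1)%R ->
  e1 = (t * e2)%R -> 0 <= a -> 0 <= g ->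
  (1 - e1)%:E * a + e1%:E * g = t%:E * ((1 - e2)%:E * a + e2%:E * g) + (1 - t)%:E * a.
Proof.
move=> /andP [t0 t1] /andP [e0 e1'] -> a0 g0.
rewrite ge0_muleDr ?mule_ge0 ?lee_fin ?subr_ge0 // !muleA -!EFinM addeAC.
have s1 : (0 <= (t * (1 - e2))%:E) by rewrite lee_fin mulr_ge0 // subr_ge0.
have s2 : (0 <= (1 - t)%:E) by rewrite lee_fin subr_ge0.
rewrite -(ge0_muleDl _ s1 s2) -EFinD.
by congr (_ * _ + _); congr EFin; ring.
Qed.

Lemma Vn_mono n (b1 b2 : R) : (0 < n)%N -> (0 <= b2)%R -> (b2 <= b1)%R ->
  Vn Q G n b1 <= Vn Q G n b2.
Proof.
move=> n0 hb2 b21.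
have hb1 : (0 <= b1)%R by apply: le_trans b21.
rewrite (Vn_pn n hb1) (Vn_pn n hb2).
set e1 := (n%:R `^ (- b1))%R; set e2 := (n%:R `^ (- b2))%R.
have e2p : (0 < e2)%R by apply: powR_gt0; rewrite ltr0n.
have e12 : (e1 <= e2)%R by apply: ler_powR; rewrite ?ler1n ?lerN2.
have e10 : (0 <= e1)%R by exact: powR_ge0.
pose t := (e1 / e2)%R.
have ht : (0 <= t <= 1)%R.
  by apply/andP; split; [exact: divr_ge0 e10 (ltW e2p) | rewrite /t ler_pdivrMr // mul1r].
have te : e1 = (t * e2)%R by rewrite /t divfK // gt_eqF.
apply: (@tv_mono _ _ _ (Q n) _ _ t n ht) => h mh h0.
rewrite !integral_mixf //.
apply: mix_alg => //; first exact: (eps01 n hb2).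
- by apply: integral_ge0 => x _.
- by apply: integral_ge0 => x _.
Qed.
End main.

Theorem lemma1 (d : measure_display) (T : measurableType d) (R : realType)
    (Q G : nat -> probability T R) :
  0 <= beta_low Q G /\ beta_low Q G <= beta_up Q G /\ beta_up Q G <= 1.
Proof.
split; first by apply: ereal_sup_ubound; left.
split.
  apply: ge_ereal_sup => x [->|[b1 [hb1 cv1] <-]];
    apply: le_ereal_inf_tmp => _ [b2 [hb2 cv2] <-]; rewrite ?lee_fin //.
  rewrite leNgt; apply/negP => b21.
  have := @lee_lim _ _ _ _ (fun n => Vn Q G n b1) (fun n => Vn Q G n b2)
    (cvgP _ cv1) (cvgP _ cv2).
  have /[swap]/[apply] : \forall n \near \oo, Vn Q G n b1 <= Vn Q G n b2.
    by exists 1%N => // n /= n1; apply: Vn_mono => //; exact: ltW.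
  by rewrite (cvg_lim _ cv1) // (cvg_lim _ cv2) // lee_fin ler10.
apply/lee_addgt0Pr => e e0.
apply: ereal_inf_lbound; exists (1 + e)%R => //; split.
  by rewrite addr_ge0 // ltW.
apply: Vn_cvg0; by rewrite ltrDl.
Qed.
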